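(* Let $a_n$ denote the number of permutations of $[n]$ avoiding the vincular pattern 12–34. Then $$\liminf_{n\to\infty}\sqrt[n]{a_n/n!}\;\ge\;\frac{1}{\log 4}\approx 0.72134752.$$
   Context: A permutation $\sigma$ of $[n]$ contains the vincular pattern 12–34 if there exist indices $i<j$ with $\sigma(i)<\sigma(i+1)<\sigma(j)<\sigma(j+1)$. It avoids it otherwise. $\log$ denotes the natural logarithm. *)

(* Defs.v *)
From mathcomp Require Import all_boot all_fingroup.
Set Implicit Arguments. Unset Strict Implicit. Unset Printing Implicit Defensive.

(* Permutations of [n] are modelled as {perm 'I_n} (0-based positions/values). *)
Definition contains_12_34 (n : nat) (s : {perm 'I_n}) : bool :=
  [exists i : 'I_n, exists i1 : 'I_n, exists j : 'I_n, exists j1 : 'I_n,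
    [&& (val i1 == (val i).+1), (val j1 == (val j).+1), (val i < val j)%N,
        (val (s i) < val (s i1))%N, (val (s i1) < val (s j))%N &
        (val (s j) < val (s j1))%N]].

Definition avoids_12_34 (n : nat) (s : {perm 'I_n}) : bool := ~~ contains_12_34 s.

Definition a_seq (n : nat) : nat := #|[set s : {perm 'I_n} | avoids_12_34 s]|.

(* Main.v *)
Require Import Defs.
From mathcomp Require Import all_boot all_fingroup.
From Stdlib Require Import Reals.
From Coquelicot Require Import Coquelicot.

From mathcomp Require Import all_boot.
Open Scope nat_scope.
Set Implicit Arguments. Unset Strict Implicit. Unset Printing Implicit Defensive.

Fixpoint choose (k : nat) (s : seq nat) : seq (seq nat) :=
  match k, s with
  | 0, _ => [:: [::]]
  | _.+1, [::] => [::]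
  | k'.+1, x :: s' => map (cons x) (choose k' s') ++ choose k s'
  end.

Lemma choose_sub k s A : A \in choose k s -> subseq A s /\ size A = k.
Proof.
elim: s k A => [|x s IH] [|k] A //=; rewrite ?inE.
- by move/eqP->.
- by move/eqP->.
- rewrite mem_cat => /orP[/mapP[B HB ->]|H].
    by have [H1 H2] := IH _ _ HB; rewrite /= eqxx H1 H2.
  have [H1 H2] := IH _ _ H; split => //.
  by apply: (subseq_trans H1 (subseq_cons s x)).
Qed.

Lemma choose_uniq k s : uniq s -> uniq (choose k s).
Proof.
elim: s k => [|x s IH] [|k] //= /andP[xs us].
rewrite cat_uniq map_inj_uniq ?IH //=; last by move=> ? ? [].
rewrite andbT; apply/hasPn => A /(choose_sub) [HA _]; apply/mapP => [[B _ EB]].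
by move: (mem_subseq HA); rewrite EB => /(_ x); rewrite inE eqxx => /(_ isT); apply/negP.
Qed.

Lemma size_choose k s : size (choose k s) = 'C(size s, k).
Proof.
elim: s k => [|x s IH] [|k] //=.
by rewrite size_cat size_map !IH binS addnC.
Qed.

Lemma uniq_flatten_map (S R : eqType) (g : S -> seq R) s :
  uniq s -> (forall x, x \in s -> uniq (g x)) ->
  (forall x y z, x \in s -> y \in s -> z \in g x -> z \in g y -> x = y) ->
  uniq (flatten (map g s)).
Proof.
elim: s => [|x s IH] //= /andP[xs us] Hu Hd.
rewrite cat_uniq Hu ?mem_head //= IH //; last first.
- by move=> a b z Ha Hb; apply: Hd; rewrite inE ?Ha ?Hb orbT.
- by move=> a Ha; apply: Hu; rewrite inE Ha orbT.
rewrite andbT; apply/hasPn => z /flatten_mapP [y ys zy]; apply/negP => zx.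
have E : x = y by apply: (Hd x y z) => //; rewrite ?inE ?ys ?orbT ?eqxx.
by move: xs; rewrite E ys.
Qed.

Definition firsts (s : seq nat) : seq (seq nat) :=
  flatten [seq choose k s | k <- iota 1 (size s)].

Lemma firsts_mem s A : A \in firsts s -> subseq A s /\ 0 < size A.
Proof.
move/flatten_mapP => [k]; rewrite mem_iota => /andP[k1 _] /choose_sub [H1 H2].
by rewrite H2.
Qed.

Lemma firsts_uniq s : uniq s -> uniq (firsts s).
Proof.
move=> us; apply: uniq_flatten_map; first exact: iota_uniq.
  by move=> *; apply: choose_uniq.
by move=> x y z _ _ /choose_sub[_ <-] /choose_sub[_ <-].
Qed.

Fixpoint osp (a : nat) (s : seq nat) : seq (seq (seq nat)) :=
  match a with
  | 0 => if s is [::] then [:: [::]] else [::]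
  | a'.+1 => flatten [seq [seq A :: P | P <- osp a' [seq x <- s | x \notin A]] | A <- firsts s]
  end.

Lemma filter_sub_size (A s : seq nat) : uniq s -> subseq A s ->
  size [seq x <- s | x \notin A] = size s - size A.
Proof.
move=> us sA.
have EA : A = [seq x <- s | x \in A] by apply/subseq_uniqP.
have /permPl/perm_size := perm_filterC (mem A) s.
rewrite size_cat -EA => <-.
by rewrite addKn.
Qed.

Lemma osp_mem a s P : uniq s -> P \in osp a s ->
  [/\ size P = a, all (fun A => 0 < size A) P, all (fun A => subseq A s) P &
      perm_eq (flatten P) s].
Proof.
elim: a s P => [|a IH] s P us /=.
  by case: s us => [|x s] // _; rewrite inE => /eqP ->.
move/flatten_mapP => [A /firsts_mem [sA nA] /mapP [Q HQ ->]].
have us' : uniq [seq x <- s | x \notin A] by apply: filter_uniq.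
have [H1 H2 H3 H4] := IH _ _ us' HQ.
split => /=; first by rewrite H1.
- by rewrite nA.
- rewrite sA /=; apply/allP => B HB.
  apply: (subseq_trans (allP H3 B HB)); exact: filter_subseq.
- have EA : A = [seq x <- s | x \in A] by apply/subseq_uniqP.
  rewrite perm_sym -(perm_filterC (mem A) s) perm_sym -EA perm_cat2l.
  exact: H4.
Qed.

Lemma osp_uniq a s : uniq s -> uniq (osp a s).
Proof.
elim: a s => [|a IH] s us /=; first by case: s us.
apply: uniq_flatten_map; first exact: firsts_uniq.
  move=> A _; rewrite map_inj_uniq; first by apply: IH; apply: filter_uniq.
  by move=> ? ? [].
by move=> A B z _ _ /mapP[P _ ->] /mapP[Q _ []].
Qed.

Fixpoint Ocnt (a p : nat) : nat :=
  match a with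
  | 0 => (p == 0)
  | a'.+1 => \sum_(1 <= k < p.+1) 'C(p, k) * Ocnt a' (p - k)
  end.

Lemma size_flatten_map (S R : Type) (g : S -> seq R) l :
  size (flatten (map g l)) = \sum_(x <- l) size (g x).
Proof. by elim: l => [|x l IH]; rewrite ?big_nil ?big_cons //= size_cat IH. Qed.

Lemma sum_const_seq (S : Type) (l : seq S) c : \sum_(x <- l) c = size l * c.
Proof. by elim: l => [|x l IH]; rewrite ?big_nil ?big_cons //= IH mulSn. Qed.

Lemma size_osp a s : uniq s -> size (osp a s) = Ocnt a (size s).
Proof.
elim: a s => [|a IH] s us /=; first by case: s us.
rewrite size_flatten_map /firsts big_flatten /= big_map.
rewrite /index_iota subn1 /=.
apply: eq_big_seq => k; rewrite mem_iota => /andP[k1 _].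
rewrite -size_choose -sum_const_seq.
apply: eq_big_seq => A /[dup] HA /choose_sub [sA szA].
by rewrite size_map IH ?filter_uniq // filter_sub_size // szA.
Qed.

Fixpoint inter (P Q : seq (seq nat)) : seq nat :=
  match P, Q with
  | A :: P', B :: Q' => A ++ B ++ inter P' Q'
  | _, _ => [::]
  end.

Definition rgood (t : nat) := fun x y : nat => (x < y) ==> (x < t <= y).

Definition blocksOK (t : nat) (P Q : seq (seq nat)) :=
  [/\ size P = size Q,
      all (fun A => (0 < size A) && sorted (fun x y => y < x) A && all (fun x => x < t) A) P &
      all (fun B => (0 < size B) && sorted (fun x y => y < x) B && all (fun x => t <= x) B) Q].

Lemma sub_gt_rgood t a A : path (fun x y => y < x) a A -> path (rgood t) a A.
Proof. apply: sub_path => x y /=; rewrite /rgood => H; by rewrite ltnNge ltnW. Qed.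

Lemma inter_path t P Q x : blocksOK t P Q -> t <= x -> path (rgood t) x (inter P Q).
Proof.
elim: P Q x => [|A P IH] [|B Q] x //= [sPQ].
move=> /andP[/andP[/andP[nA sA] aA] HP] /andP[/andP[/andP[nB sB] aB] HQ] tx.
case: sPQ => sPQ.
case: A nA sA aA => [|a A] // _ sA /andP[hat aA].
case: B nB sB aB => [|b B] // _ sB /andP[tb aB].
rewrite /= {1}/rgood.
have -> : (x < a) = false by apply/negbTE; rewrite -leqNgt; apply: leq_trans (ltnW hat) tx.
rewrite /= cat_path (sub_gt_rgood t sA) /=.
have Hl : last a A < t by have := mem_last a A; rewrite inE => /orP[/eqP->//|/(allP aA)].
rewrite {1}/rgood Hl tb implybT /= cat_path (sub_gt_rgood t sB) /=.
apply: IH; first by split.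
by have := mem_last b B; rewrite inE => /orP[/eqP->//|/(allP aB)].
Qed.

Lemma inter_sorted t P Q : blocksOK t P Q -> sorted (rgood t) (inter P Q).
Proof.
move=> H; have := inter_path (x := t) H (leqnn t).
by case: (inter P Q) => //= y w /andP[].
Qed.

Lemma split_find (a : pred nat) (A X : seq nat) :
  all (predC a) A -> find a X = 0 ->
  take (find a (A ++ X)) (A ++ X) = A /\ drop (find a (A ++ X)) (A ++ X) = X.
Proof.
move=> HA HX.
have -> : find a (A ++ X) = size A.
  rewrite find_cat.
  have -> : has a A = false by apply/negbTE; rewrite -all_predC.
  by rewrite HX addn0.
by rewrite take_size_cat // drop_size_cat.
Qed.

Lemma inter_nil_or t P Q : blocksOK t P Q -> find (fun x => x < t) (inter P Q) = 0.
Proof.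
case: P Q => [|A P] [|B Q] //= [_ /andP[/andP[/andP[nA _] aA] _] _].
case: A nA aA => [|a A] //= _ /andP[-> _] //.
Qed.

Lemma inter_inj t P Q P' Q' : blocksOK t P Q -> blocksOK t P' Q' ->
  inter P Q = inter P' Q' -> P = P' /\ Q = Q'.
Proof.
elim: P Q P' Q' => [|A P IH] [|B Q] [|A' P'] [|B' Q'] //= [sPQ HP HQ] [sPQ' HP' HQ'] //.
- move: HP' => /andP[/andP[/andP[nA _] _] _] E.
  by move: (congr1 size E); rewrite /= !size_cat; case: (size A') nA.
- move: HP => /andP[/andP[/andP[nA _] _] _] E.
  by move: (congr1 size E); rewrite /= !size_cat; case: (size A) nA.
move: HP HQ HP' HQ' => /andP[/andP[/andP[nA sA] aA] HP] /andP[/andP[/andP[nB sB] aB] HQ].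
move=> /andP[/andP[/andP[nA' sA'] aA'] HP'] /andP[/andP[/andP[nB' sB'] aB'] HQ'] E.
have bOK : blocksOK t P Q by split => //; case: sPQ.
have bOK' : blocksOK t P' Q' by split => //; case: sPQ'.
have f1 : forall B R, 0 < size B -> all (fun x => t <= x) B ->
    find (fun x => t <= x) (B ++ R) = 0.
  by move=> [|b B0] R //= _ /andP[-> _].
have cA : all (predC (fun x => t <= x)) A.
  by apply: sub_all aA => x /=; rewrite -ltnNge.
have cA' : all (predC (fun x => t <= x)) A'.
  by apply: sub_all aA' => x /=; rewrite -ltnNge.
have [E1 E2] := split_find cA (f1 B (inter P Q) nB aB).
have [E1' E2'] := split_find cA' (f1 B' (inter P' Q') nB' aB').
rewrite E in E1 E2.
have eA : A = A' by rewrite -E1 E1'.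
have eR : B ++ inter P Q = B' ++ inter P' Q' by rewrite -E2 E2'.
have cB : all (predC (fun x => x < t)) B.
  by apply: sub_all aB => x /=; rewrite -leqNgt.
have cB' : all (predC (fun x => x < t)) B'.
  by apply: sub_all aB' => x /=; rewrite -leqNgt.
have [F1 F2] := split_find cB (inter_nil_or bOK).
have [F1' F2'] := split_find cB' (inter_nil_or bOK').
rewrite eR in F1 F2.
have eB : B = B' by rewrite -F1 F1'.
have eI : inter P Q = inter P' Q' by rewrite -F2 F2'.
have [-> ->] := IH _ _ _ bOK bOK' eI.
by rewrite eA eB.
Qed.

Lemma rgood_nth t w i : sorted (rgood t) w -> i.+1 < size w ->
  nth 0 w i < nth 0 w i.+1 -> nth 0 w i < t <= nth 0 w i.+1.
Proof.
case: w => [|y w] //= Hs Hi Hlt.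
move/(pathP 0): Hs => /(_ i Hi).
by rewrite /rgood /= => /implyP /(_ Hlt).
Qed.

Definition wperm n (w : seq nat) : {ffun 'I_n -> 'I_n} := [ffun i : 'I_n => insubd i (nth 0 w (val i))].

Lemma transfer n t (W : seq (seq nat)) : uniq W ->
  (forall w, w \in W -> perm_eq w (iota 0 n) && sorted (rgood t) w) -> size W <= a_seq n.
Proof.
move=> uW HW.
have Hs : forall w, w \in W -> size w = n /\ uniq w /\ forall i, i < n -> nth 0 w i < n.
  move=> w /HW /andP[pw _]; have sz : size w = n by rewrite (perm_size pw) size_iota.
  split => //; split; first by rewrite (perm_uniq pw) iota_uniq.
  move=> i Hi; have : nth 0 w i \in iota 0 n by rewrite -(perm_mem pw) mem_nth ?sz.
  by rewrite mem_iota.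
have valF : forall w, w \in W -> forall i : 'I_n, val (wperm n w i) = nth 0 w i.
  by move=> w /Hs [_ [_ Hlt]] i; rewrite ffunE val_insubd (Hlt _ (ltn_ord i)).
have injF : forall w, w \in W -> injective (wperm n w).
  move=> w Hw i j E; have := congr1 val E; rewrite !valF // => /eqP.
  have [sz [uw _]] := Hs w Hw.
  by rewrite nth_uniq ?sz // => /eqP /val_inj.
set A := [set s : {perm 'I_n} | avoids_12_34 s].
have -> : size W = size (map (wperm n) W) by rewrite size_map.
have uM : uniq (map (wperm n) W).
  rewrite map_inj_in_uniq // => w w' Hw Hw' E.
  have [sz _] := Hs w Hw; have [sz' _] := Hs w' Hw'.
  apply: (@eq_from_nth _ 0); first by rewrite sz sz'.
  move=> i; rewrite sz => Hi.
  by rewrite -(valF w Hw (Ordinal Hi)) -(valF w' Hw' (Ordinal Hi)) E.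
rewrite -(card_uniqP uM).
apply: leq_trans (_ : #|[set val s | s in A]| <= _); last first.
  by rewrite card_imset //; apply: val_inj.
apply: subset_leq_card; apply/subsetP => f /mapP [w Hw ->].
have [sz _] := Hs w Hw.
apply/imsetP; exists (perm (injF w Hw)); last first.
  by apply/ffunP => i; rewrite -(permE (injF w Hw) i) -pvalE.
rewrite inE /avoids_12_34 /contains_12_34; apply/negP.
move=> /existsP[i /existsP[i1 /existsP [j /existsP[j1 /and5P[E1 E2 _ H1 /andP[H2 H3]]]]]].
move: H1 H2 H3; rewrite !permE !valF // (eqP E1) (eqP E2) => H1 H2 H3.
have Hi1 : (val i).+1 < size w by rewrite sz -(eqP E1) ltn_ord.
have Hj1 : (val j).+1 < size w by rewrite sz -(eqP E2) ltn_ord.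
have /andP[_ T1] := rgood_nth (t := t) (proj2 (andP (HW w Hw))) Hi1 H1.
have /andP[T2 _] := rgood_nth (t := t) (proj2 (andP (HW w Hw))) Hj1 H3.
by have := leq_ltn_trans T1 (ltn_trans H2 T2); rewrite ltnn.
Qed.

Lemma inter_perm P Q : size P = size Q -> perm_eq (inter P Q) (flatten P ++ flatten Q).
Proof.
elim: P Q => [|A P IH] [|B Q] //= [sPQ].
rewrite -catA perm_cat2l perm_sym perm_catCA perm_cat2l perm_sym.
exact: IH.
Qed.

Lemma gt_trans : transitive (fun x y : nat => y < x).
Proof. by move=> y x z h1 h2; apply: ltn_trans h2 h1. Qed.

Lemma osp_blocks a lo m P : P \in osp a (rev (iota lo m)) ->
  [/\ size P = a,
      all (fun A => (0 < size A) && sorted (fun x y => y < x) A) P,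
      all (fun A => all (fun x => lo <= x < lo + m) A) P &
      perm_eq (flatten P) (iota lo m)].
Proof.
have us : uniq (rev (iota lo m)) by rewrite rev_uniq iota_uniq.
move=> /(osp_mem us) [H1 H2 H3 H4]; split => //.
- apply/allP => A HA; rewrite (allP H2 A HA) /=.
  apply: (subseq_sorted gt_trans (allP H3 A HA)).
  by rewrite rev_sorted; apply: iota_ltn_sorted.
- apply/allP => A HA; apply/allP => x Hx.
  by rewrite -mem_iota -mem_rev; apply: (mem_subseq (allP H3 A HA)).
- by rewrite perm_sym -(perm_rev (iota lo m)) perm_sym.
Qed.

Lemma blocksOK_of a m P Q : P \in osp a (rev (iota 0 m)) -> Q \in osp a (rev (iota m m)) ->
  blocksOK m P Q.
Proof.
move=> /osp_blocks [sP nP vP _] /osp_blocks [sQ nQ vQ _]; split.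
- by rewrite sP sQ.
- apply/allP => A HA; rewrite (allP nP A HA) /=.
  by apply: sub_all (allP vP A HA) => x /andP[].
- apply/allP => B HB; rewrite (allP nQ B HB) /=.
  by apply: sub_all (allP vQ B HB) => x /andP[].
Qed.

Definition Wd a m := [seq inter P Q | P <- osp a (rev (iota 0 m)), Q <- osp a (rev (iota m m))].

Lemma Wd_size a m : size (Wd a m) = Ocnt a m * Ocnt a m.
Proof.
by rewrite size_allpairs !size_osp ?rev_uniq ?iota_uniq // !size_rev !size_iota.
Qed.

Lemma Wd_uniq a m : uniq (Wd a m).
Proof.
apply: allpairs_uniq; rewrite ?osp_uniq ?rev_uniq ?iota_uniq //.
move=> [P Q] [P' Q'] /allpairsP [[P1 Q1] [/= H1 H2 [-> ->]]] /allpairsP [[P2 Q2] [/= H3 H4 [-> ->]]] /= E.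
have [-> ->] := inter_inj (blocksOK_of H1 H2) (blocksOK_of H3 H4) E.
done.
Qed.

Lemma Wd_good a m w : w \in Wd a m -> perm_eq w (iota 0 (m + m)) && sorted (rgood m) w.
Proof.
move=> /allpairsP [[P Q] [/= HP HQ ->]].
have bOK := blocksOK_of HP HQ.
rewrite inter_sorted // andbT.
have [sP _ _ pP] := osp_blocks HP; have [sQ _ _ pQ] := osp_blocks HQ.
have szPQ : size P = size Q by rewrite sP sQ.
apply: (perm_trans (inter_perm szPQ)).
by rewrite iotaD add0n perm_cat.
Qed.

Lemma even_bound a m : Ocnt a m * Ocnt a m <= a_seq (m + m).
Proof.
rewrite -Wd_size; apply: (transfer (t := m)); first exact: Wd_uniq.
exact: Wd_good.
Qed.

Lemma odd_bound a m : Ocnt a m * Ocnt a m <= a_seq (m + m).+1.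
Proof.
rewrite -Wd_size -(size_map (fun w => rcons (map succn w) 0)).
apply: (transfer (t := m.+1)).
  rewrite map_inj_uniq ?Wd_uniq //.
  move=> w w' E; apply: (inj_map succn_inj); exact: (rcons_injl _ E).
move=> w' /mapP [w Hw ->]; have /andP [pw sw] := Wd_good Hw.
apply/andP; split.
  rewrite perm_rcons /= perm_cons.
  have -> : iota 1 (m + m) = map succn (iota 0 (m + m)).
    by rewrite (iotaDl 1 0) .
  exact: perm_map.
case: w {Hw pw} sw => [|y w] //= sw.
rewrite rcons_path path_map andbT.
have E : relpre succn (rgood m.+1) =2 rgood m by move=> x z; rewrite /relpre /rgood /= !ltnS.
by rewrite (eq_path E).
Qed.

Definition Fub p := \sum_(a < p.+1) Ocnt a p.

Lemma pigeon p : exists a, Fub p <= p.+1 * Ocnt a p.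
Proof.
have H0 : 0 < #|(predT : pred 'I_p.+1)| by rewrite cardT size_enum_ord.
have [a _ Ha] := @eq_bigmax_cond _ predT (fun a : 'I_p.+1 => Ocnt a p) H0.
exists a; rewrite /Fub.
apply: leq_trans (_ : \sum_(i < p.+1) Ocnt a p <= _); last by rewrite sum_nat_const card_ord.
apply: leq_sum => i _; rewrite -Ha.
by apply: leq_bigmax_cond.
Qed.

Lemma sum_ord_mono (F : nat -> nat) n N : n <= N -> \sum_(i < n) F i <= \sum_(i < N) F i.
Proof.
elim: N => [|N IH]; first by rewrite leqn0 => /eqP ->.
rewrite leq_eqVlt => /orP [/eqP -> //|]; rewrite ltnS => /IH H.
by rewrite big_ord_recr /=; apply: leq_trans H (leq_addr _ _).
Qed.

Lemma Fub_rec p : \sum_(1 <= k < p.+2) 'C(p.+1, k) * Fub (p.+1 - k) <= Fub p.+1.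
Proof.
rewrite [X in _ <= X]/Fub big_ord_recl /= add0n.
rewrite exchange_big /=.
rewrite big_nat_cond [X in _ <= X]big_nat_cond; apply: leq_sum => k /andP[/andP[k1 kp] _].
rewrite -big_distrr /=; rewrite leq_mul2l /Fub; apply/orP; right.
apply: (sum_ord_mono (fun a => Ocnt a (p.+1 - k))).
by rewrite ltnS leq_subLR -addn1 addnC leq_add2r.
Qed.

Lemma Fub_fact p : p`! <= Fub p.
Proof.
elim: p => [|p IH]; first by rewrite /Fub big_ord_recl big_ord0.
apply: leq_trans (Fub_rec p).
rewrite big_ltn // bin1 subSS subn0 factS.
by apply: leq_trans (leq_addr _ _); rewrite leq_mul2l IH orbT.
Qed.

Lemma bin_le_exp n k : 'C(n, k) <= 2 ^ n.
Proof.
elim: n k => [|n IH] [|k] //=; first by rewrite bin0 expn_gt0.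
by rewrite binS expnS mul2n -addnn leq_add.
Qed.

Lemma fact_double m : (m + m)`! <= 4 ^ m * (m`! * m`!).
Proof.
rewrite -(bin_fact (leq_addr m m)) addnK leq_mul2r.
by rewrite (_ : 4 = 2 ^ 2) // -expnM mul2n -addnn bin_le_exp orbT.
Qed.

From mathcomp Require Import all_order all_algebra.
From mathcomp Require Import Rstruct.
From mathcomp Require ring.
Module PB.
From Stdlib Require Import Reals.
From mathcomp Require Import all_boot all_order all_algebra.
From mathcomp Require Import Rstruct.
From mathcomp Require Import ring.
Import Order.TTheory GRing.Theory Num.Theory.
Local Open Scope ring_scope.
Set Implicit Arguments. Unset Strict Implicit. Unset Printing Implicit Defensive.

Lemma Fub_lower (y : Rdefinitions.R) K : 0 < y -> y < 1 ->
  1 <= \sum_(1 <= k < K.+1) y ^+ k / (k`!)%:R ->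
  forall p, (p`!)%:R * y ^+ K <= (Fub p)%:R * y ^+ p.
Proof.
move=> y0 y1 HK p; elim/ltn_ind: p => p IH.
have yp : forall n, 0 <= y ^+ n by move=> n; apply: exprn_ge0; apply: ltW.
case: (leqP p K) => hp.
  apply: ler_pM => //; first by rewrite ler_nat Fub_fact.
  by apply: ler_wiXn2l => //; [apply: ltW | apply: ltW].
case: p hp IH => [//|q] hq IH.
have S1 : \sum_(1 <= k < q.+2) ('C(q.+1, k) * Fub (q.+1 - k)%N)%:R * y ^+ q.+1
          <= (Fub q.+1)%:R * y ^+ q.+1.
  by rewrite -mulr_suml -natr_sum; apply: ler_wpM2r => //; rewrite ler_nat Fub_rec.
apply: le_trans S1.
have S2 : \sum_(1 <= k < q.+2) (q.+1`!)%:R * y ^+ K * (y ^+ k / (k`!)%:R) <=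
          \sum_(1 <= k < q.+2) ('C(q.+1, k) * Fub (q.+1 - k)%N)%:R * y ^+ q.+1.
  rewrite big_nat_cond [X in _ <= X]big_nat_cond.
  apply: ler_sum => k /andP[/andP[k1 kq] _].
  have kq' : (k <= q.+1)%N by [].
  have Ef : ('C(q.+1, k))%:R * ((q.+1 - k)%N`!)%:R = (q.+1`!)%:R / (k`!)%:R :> Rdefinitions.R.
    rewrite -(bin_fact kq') !natrM.
    by field; rewrite pnatr_eq0 -lt0n fact_gt0.
  have Ey : y ^+ q.+1 = y ^+ (q.+1 - k)%N * y ^+ k by rewrite -exprD subnK.
  rewrite Ey natrM.
  have IHk : ((q.+1 - k)`!)%:R * y ^+ K <= (Fub (q.+1 - k)%N)%:R * y ^+ (q.+1 - k)%N.
    by apply: IH; rewrite ltn_subrL k1.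
  have E1 : (q.+1)`!%:R * y ^+ K * (y ^+ k / k`!%:R) =
     ('C(q.+1, k))%:R * (((q.+1 - k)%N`!)%:R * y ^+ K) * y ^+ k :> Rdefinitions.R.
    by rewrite !mulrA Ef; ring.
  rewrite E1.
  have E2 : ('C(q.+1, k))%:R * (Fub (q.+1 - k)%N)%:R * (y ^+ (q.+1 - k)%N * y ^+ k) =
     ('C(q.+1, k))%:R * ((Fub (q.+1 - k)%N)%:R * y ^+ (q.+1 - k)%N) * y ^+ k
     :> Rdefinitions.R by ring.
  rewrite E2; apply: ler_wpM2r => //; apply: ler_wpM2l => //; exact: ler0n.
apply: le_trans S2.
rewrite -mulr_sumr.
rewrite -[X in X <= _]mulr1; apply: ler_wpM2l.
  by apply: mulr_ge0 => //; exact: ler0n.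
apply: le_trans HK _.
rewrite [X in _ <= X](@big_cat_nat _ _ _ K.+1) //=; last exact: (leq_trans hq (leqnSn _)).
rewrite lerDl; apply: sumr_ge0 => k _.
by apply: mulr_ge0 => //; rewrite invr_ge0 ler0n.
Qed.

Lemma an_bound (y : Rdefinitions.R) K : 1 <= 2 * y -> 0 < y -> y < 1 ->
  1 <= \sum_(1 <= k < K.+1) y ^+ k / (k`!)%:R ->
  forall n, (n`!)%:R * y ^+ (K + K) <= (a_seq n)%:R * ((n.+1 ^ 3)%N)%:R * (2 * y) ^+ n.
Proof.
move=> y2 y0 y1 HK n.
set m := n./2.
have hn : n = (m + m + odd n)%N by rewrite -{1}(odd_double_half n) addnC -addnn.
have [a Ha] := pigeon m.
have Hae : (Ocnt a m * Ocnt a m <= a_seq n)%N.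
  rewrite hn; case: (odd n); rewrite ?addn0 ?addn1; [exact: odd_bound | exact: even_bound].
have Hf : (n`! <= (m + m).+1 * (m + m)`!)%N.
  rewrite hn; case: (odd n); rewrite ?addn0 ?addn1 ?factS //.
  by apply: leq_pmull.
have Hf2 : (n`! <= (m + m).+1 * (4 ^ m * (m`! * m`!)))%N.
  by apply: leq_trans Hf _; rewrite leq_mul2l fact_double orbT.
have Hpoly : ((m + m).+1 * (m.+1 * m.+1) <= n.+1 ^ 3)%N.
  have h1 : ((m + m).+1 <= n.+1)%N by rewrite ltnS hn leq_addr.
  have h2 : (m.+1 <= n.+1)%N by rewrite ltnS hn -addnA leq_addr.
  by rewrite (_ : 3 = 1 + 1 + 1)%N // !expnD expn1 -mulnA leq_mul // leq_mul.
have yp : forall k, 0 <= y ^+ k by move=> k; apply: exprn_ge0; apply: ltW.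
set O := (Ocnt a m)%:R : Rdefinitions.R.
set F := (m`!)%:R : Rdefinitions.R.
have O0 : 0 <= O by apply: ler0n.
have F0 : 0 <= F by apply: ler0n.
have h1 : F * y ^+ K <= (m.+1)%:R * O * y ^+ m.
  apply: le_trans (Fub_lower y0 y1 HK m) _.
  by rewrite -natrM; apply: ler_wpM2r => //; rewrite ler_nat.
have h2 : (F * y ^+ K) * (F * y ^+ K) <= ((m.+1)%:R * O * y ^+ m) * ((m.+1)%:R * O * y ^+ m).
  by apply: ler_pM => //; apply: mulr_ge0.
have h5 : (4 ^ m)%:R * (y ^+ m * y ^+ m) <= (2 * y) ^+ n.
  rewrite [in X in _ <= X]hn exprD.
  have -> : (4 ^ m)%:R * (y ^+ m * y ^+ m) = (2 * y) ^+ (m + m) :> Rdefinitions.R.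
    rewrite exprD !exprMn natrX (_ : 4%:R = 2 * 2 :> Rdefinitions.R); last by rewrite -natrM.
    by rewrite exprMn; ring.
  rewrite -[X in X <= _]mulr1; apply: ler_wpM2l.
    by apply: exprn_ge0; apply: le_trans y2.
  by case: (odd n); rewrite ?expr0 ?expr1.
have h3 : O * O <= (a_seq n)%:R by rewrite -natrM ler_nat.
apply: le_trans (_ : ((m + m).+1 * (4 ^ m * (m`! * m`!)))%:R * y ^+ (K + K) <= _).
  by apply: ler_wpM2r => //; rewrite ler_nat.
have -> : ((m + m).+1 * (4 ^ m * (m`! * m`!)))%:R * y ^+ (K + K) =
   ((m + m).+1)%:R * (4 ^ m)%:R * ((F * y ^+ K) * (F * y ^+ K)) :> Rdefinitions.R.
  by rewrite !natrM exprD /F; ring.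
apply: le_trans (_ : ((m + m).+1)%:R * (4 ^ m)%:R * (((m.+1)%:R * O * y ^+ m) * ((m.+1)%:R * O * y ^+ m)) <= _).
  by apply: ler_wpM2l => //; apply: mulr_ge0; apply: ler0n.
have -> : ((m + m).+1)%:R * (4 ^ m)%:R * (((m.+1)%:R * O * y ^+ m) * ((m.+1)%:R * O * y ^+ m)) =
   (((m + m).+1 * (m.+1 * m.+1))%N)%:R * (O * O) * ((4 ^ m)%:R * (y ^+ m * y ^+ m)) :> Rdefinitions.R.
  by rewrite !natrM; ring.
rewrite [X in _ <= X](_ : _ = ((n.+1 ^ 3)%N)%:R * (a_seq n)%:R * (2 * y) ^+ n); last by ring.
apply: ler_pM.
- by apply: mulr_ge0; [apply: ler0n | apply: mulr_ge0].
- by apply: mulr_ge0; [apply: ler0n | apply: mulr_ge0].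
- by apply: ler_pM; [apply: ler0n | apply: mulr_ge0 | rewrite ler_nat | exact: h3].
- exact: h5.
Qed.

Definition sumK (y : Rdefinitions.R) K := \sum_(1 <= k < K.+1) y ^+ k / (k`!)%:R.

Lemma fact_factorial n : Factorial.fact n = n`!.
Proof. by elim: n => [|n IH] //=; rewrite factS -IH. Qed.

Lemma sum_exp_bridge (y : Rdefinitions.R) N :
  Rfunctions.sum_f_R0 (fun i => Rmult (Rinv (INR (Factorial.fact i))) (pow y i)) N =
  Rplus R1 (sumK y N).
Proof.
rewrite /sumK; elim: N => [|N IH].
  by rewrite big_geq //= Rinv_1 RmultE RplusE mulr1 addr0.
have E : forall g, Rfunctions.sum_f_R0 g N.+1 = Rplus (Rfunctions.sum_f_R0 g N) (g N.+1) by [].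
rewrite E IH [in RHS]big_nat_recr // !RplusE -addrA; congr (_ + (_ + _)).
by rewrite RmultE INRE RinvE RpowE fact_factorial mulrC.
Qed.

Lemma an_bound_R (y : Rdefinitions.R) K : Rle R1 (Rplus y y) -> Rlt R0 y -> Rlt y R1 ->
  Rle R1 (sumK y K) -> forall n,
  Rle (Rmult (INR (n`!)) (pow y (K + K)))
      (Rmult (Rmult (INR (a_seq n)) (INR (n.+1 ^ 3))) (pow (Rplus y y) n)).
Proof.
move=> /RleP y2 /RltP y0 /RltP y1 /RleP HK n.
apply/RleP; rewrite !INRE !RpowE !RmultE RplusE.
have -> : y + y = 2 * y by ring.
apply: an_bound => //.
by rewrite -(_ : y + y = 2 * y) //; ring.
Qed.

End PB.
Import PB.
Unset Implicit Arguments.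
From mathcomp Require Import all_boot.
From Stdlib Require Import Reals Lra Lia Ring Field Psatz.
From Coquelicot Require Import Coquelicot.
Open Scope R_scope.

Definition useq (n : nat) : R := Rpower (INR (a_seq n) / INR (n`!)) (1 / INR n).

Lemma ln2_lt1 : ln 2 < 1.
Proof.
rewrite -[X in _ < X]ln_exp; apply: ln_increasing; first lra.
have := exp_ineq1 1; lra.
Qed.

Lemma K_exists y : ln 2 < y -> exists K, R1 <= sumK y K.
Proof.
move=> Hy.
have e2 : 2 < exp y.
  rewrite -[X in X < _]exp_ln; last lra.
  by apply: exp_increasing.
have pos : exp y - 2 > 0 by lra.
have [N HN] := proj2_sig (exist_exp y) _ pos.
have := HN N (Nat.le_refl N); rewrite /Rdist.
move: (sum_exp_bridge y N) => /= ->.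
change (proj1_sig (exist_exp y)) with (exp y).
move=> H; exists N; apply Rabs_def2 in H; lra.
Qed.

Lemma exp_mono x z : x <= z -> exp x <= exp z.
Proof. move=> [H|->]; [left; exact: exp_increasing | right; reflexivity]. Qed.

Lemma ln_mono x z : 0 < x -> x <= z -> ln x <= ln z.
Proof. move=> H0 [H|->]; [left; exact: ln_increasing | right; reflexivity]. Qed.

Lemma pow_le1' y k : 0 < y -> y <= 1 -> y ^ k <= 1.
Proof.
move=> y0 y1; elim: k => [|k IH] /=; first lra.
have := pow_lt y k y0; nra.
Qed.

Lemma useq_lower y K n : ln 2 < y -> y < 1 -> R1 <= sumK y K -> (1 <= n)%nat ->
  exp (2 * ln (y ^ (K + K)) * / (INR n + 1) - 6 * (ln (INR n + 1) / (INR n + 1)) - ln (y + y))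
  <= useq n.
Proof.
move=> Hy y1 HK n1.
have y2 : 1 <= y + y by have := ln_lt_2; lra.
have y0 : 0 < y by lra.
set c := y ^ (K + K).
have c0 : 0 < c by apply: pow_lt.
have lc : ln c <= 0 by rewrite -ln_1; apply: ln_mono => //; apply: pow_le1'; lra.
have Hb := an_bound_R y2 y0 y1 HK n.
set t := INR n.
have t1 : 1 <= t by rewrite /t -/(INR 1); apply: le_INR; apply/leP.
have E3 : INR (expn n.+1 3) = (t + 1) ^ 3.
  rewrite (_ : expn n.+1 3 = muln n.+1 (muln n.+1 n.+1)); last by rewrite !expnS expn0 muln1.
  by rewrite -!multE !mult_INR S_INR /= /t; ring.
rewrite E3 -/c in Hb.
have f0 : 0 < INR (n`!) by apply: lt_0_INR; apply/ltP; apply: fact_gt0.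
set Y := y + y in Hb *.
have Y0 : 0 < Y by rewrite /Y; lra.
have YN : 0 < Y ^ n by apply: pow_lt.
have P0 : 0 < (t + 1) ^ 3 by apply: pow_lt; lra.
have PY : 0 < (t + 1) ^ 3 * Y ^ n by apply: Rmult_lt_0_compat.
have Hx : c / ((t + 1) ^ 3 * Y ^ n) <= INR (a_seq n) / INR (n`!).
  have D : 0 < (t + 1) ^ 3 * Y ^ n * INR (n`!) by apply: Rmult_lt_0_compat.
  apply: (Rmult_le_reg_r _ _ _ D).
  have PYn : (t + 1) ^ 3 * Y ^ n <> 0 by apply: Rgt_not_eq.
  have fn : INR (n`!) <> 0 by apply: Rgt_not_eq.
  have YNn : Y ^ n <> 0 by apply: Rgt_not_eq.
  have tn : t + 1 <> 0 by lra.
  replace (c / ((t + 1) ^ 3 * Y ^ n) * ((t + 1) ^ 3 * Y ^ n * INR (n`!))) with (c * INR (n`!)) by (field; repeat split; auto).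
  replace (INR (a_seq n) / INR (n`!) * ((t + 1) ^ 3 * Y ^ n * INR (n`!))) with (INR (a_seq n) * (t + 1) ^ 3 * Y ^ n) by (field; repeat split; auto).
  lra.
have x0 : 0 < c / ((t + 1) ^ 3 * Y ^ n) by apply: Rdiv_lt_0_compat.
have Lx := ln_mono _ _ x0 Hx.
have t10 : 0 < t + 1 by lra.
rewrite (ln_div _ _ c0 PY) (ln_mult _ _ P0 YN) (ln_pow _ 3 t10) (ln_pow _ n Y0) in Lx.
rewrite /useq /Rpower -/t.
apply: exp_mono.
set B := ln (t + 1).
have B0 : 0 <= B by rewrite /B -ln_1; apply: ln_mono; lra.
have p0 : 0 < / t by apply: Rinv_0_lt_compat; lra.
have q0 : 0 < / (t + 1) by apply: Rinv_0_lt_compat; lra.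
have pt : / t * t = 1 by field; lra.
have qt : / (t + 1) * (t + 1) = 1 by field; lra.
have pq : / t <= 2 * / (t + 1) by nra.
rewrite /Rdiv Rmult_1_l.
rewrite (_ : INR 3 = 3) in Lx; last by simpl; ring.
set A := ln c in lc Lx *.
set LY := ln Y in Lx *.
set L := ln (INR (a_seq n) * / INR (n`!)) in Lx *.
rewrite -/t -/B.
rewrite -/B -/t in Lx.
have h1 : / t * (A - (3 * B + t * LY)) <= / t * L by apply: Rmult_le_compat_l; lra.
have h2 : 2 * A * / (t + 1) <= A * / t by nra.
have h3 : B * / t <= 2 * B * / (t + 1) by nra.
have h4 : / t * (t * LY) = LY by rewrite -Rmult_assoc pt; ring.
nra.
Qed.

Lemma w_lim A LY : is_lim_seq (fun n => exp (2 * A * / (INR n + 1) - 6 * (ln (INR n + 1) / (INR n + 1)) - LY)) (exp (- LY)).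
Proof.
have Hu : is_lim_seq (fun n => INR n + 1) p_infty.
  apply: (is_lim_seq_ext (fun n => INR (S n))); first by move=> n; rewrite S_INR.
  by apply/(is_lim_seq_incr_1 INR); apply: is_lim_seq_INR.
have H1 : is_lim_seq (fun n => / (INR n + 1)) 0.
  have := is_lim_seq_inv _ _ Hu; rewrite /=; apply => //.
have H2 : is_lim_seq (fun n => ln (INR n + 1) / (INR n + 1)) 0.
  apply: (is_lim_comp_seq (fun x => ln x / x) _ p_infty 0) => //.
  - exact: is_lim_div_ln_p.
  - by exists 0%nat.
have H3 : is_lim_seq (fun n => 2 * A * / (INR n + 1) - 6 * (ln (INR n + 1) / (INR n + 1)) - LY) (- LY).
  have := is_lim_seq_plus' _ _ _ _ (is_lim_seq_plus' _ _ _ _ (is_lim_seq_scal_l _ (2 * A) _ H1)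
          (is_lim_seq_scal_l _ (- 6) _ H2)) (is_lim_seq_const (- LY)).
  rewrite /= !Rmult_0_r !Rplus_0_l.
  apply: is_lim_seq_ext => n; ring.
apply: is_lim_seq_continuous => //.
exact: derivable_continuous_pt (derivable_pt_exp _).
Qed.

Lemma liminf_y y eps : ln 2 < y -> y < 1 -> 0 < eps ->
  Rbar_le (Finite (/ (y + y) - eps)) (LimInf_seq useq).
Proof.
move=> Hy y1 e0.
have [K HK] := K_exists _ Hy.
have Y0 : 0 < y + y by have := ln_lt_2; lra.
have Hw := w_lim (ln (y ^ (K + K))) (ln (y + y)).
rewrite exp_Ropp exp_ln // in Hw.
apply is_lim_seq_spec in Hw.
have [N HN] := Hw (mkposreal eps e0).
rewrite -(LimInf_seq_const (/ (y + y) - eps)).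
apply: LimInf_le.
exists (S N) => n Hn.
have := HN n ltac:(lia); rewrite /= => /Rabs_def2 [Ha Hb].
have := useq_lower _ _ n Hy y1 HK ltac:(apply/leP; lia).
lra.
Qed.

Lemma final_useq : Rbar_le (Finite (1 / ln 4)) (LimInf_seq useq).
Proof.
have l2 := ln_lt_2; have l1 := ln2_lt1.
have L4 : ln 4 = ln 2 + ln 2.
  rewrite -ln_mult; try lra; f_equal; lra.
have key : forall y L, ln 2 < y -> y < 1 -> LimInf_seq useq = Finite L -> / (y + y) <= L.
  move=> y L Hy y1 E.
  apply: Rnot_lt_le => H.
  have := liminf_y y ((/ (y + y) - L) / 2) Hy y1 ltac:(lra).
  rewrite E /=; lra.
case E : (LimInf_seq useq) => [L| |] //=.
- rewrite L4.
  apply: Rnot_lt_le => HL.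
  set k := 1 / (ln 2 + ln 2) in HL.
  have kk : k * (ln 2 + ln 2) = 1 by rewrite /k; field; lra.
  case: (Rle_dec L (1 / 2)) => HL2.
  + have := key ((ln 2 + 1) / 2) L ltac:(lra) ltac:(lra) E.
    set iy := / _.
    have yy : iy * ((ln 2 + 1) / 2 + (ln 2 + 1) / 2) = 1 by rewrite /iy; field; lra.
    nra.
  + set z := / (L + L).
    have zz : z * (L + L) = 1 by rewrite /z; field; lra.
    have z1 : z < 1 by nra.
    have z2 : ln 2 < z by nra.
    have := key ((ln 2 + z) / 2) L ltac:(lra) ltac:(lra) E.
    set iy := / _.
    have yy : iy * ((ln 2 + z) / 2 + (ln 2 + z) / 2) = 1 by rewrite /iy; field; lra.
    nra.
- have := liminf_y ((ln 2 + 1) / 2) 1 ltac:(lra) ltac:(lra) ltac:(lra).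
  by rewrite E.
Qed.

Delimit Scope R_scope with R.

Theorem proposition12 :
  Rbar_le (Finite (1 / ln 4)%R)
    (LimInf_seq (fun n : nat =>
       Rpower (INR (a_seq n) / INR (n`!))%R (1 / INR n)%R)).
Proof. exact: final_useq. Qed.
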